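(* Let $s \geq 1$, $\Gamma = (\gamma_1, \ldots, \gamma_s), \alpha = (\alpha_1, \ldots, \alpha_s) \in \mathbb{Z}^s$, and $u \in \mathbb{Z}_{\geq 0}$. For any fixed $\Pi \subset [s]$ with $|\Pi| > u$, \[ \sum_{\substack{\sigma \in \mathfrak{S}_s \\ M \subset \Pi}} (-1)^{|M|} \operatorname{sgn}(\sigma)\, \Delta_s(\sigma \cdot^\alpha \Gamma - 1_M)\, |M|^u = 0. \]
   Context: For $\sigma \in \mathfrak{S}_s$ and $\Gamma \in \mathbb{Z}^s$, $\sigma \cdot \Gamma = (\gamma_{\sigma^{-1}(1)}, \ldots, \gamma_{\sigma^{-1}(s)})$, and $\sigma \cdot^\alpha \Gamma = \sigma \cdot (\Gamma + \alpha) - \alpha$, i.e. its $\ell$-th entry is $\gamma_{\sigma^{-1}(\ell)} + \alpha_{\sigma^{-1}(\ell)} - \alpha_\ell$. $\Delta_s(y_1, \ldots, y_s) = \prod_{1 \leq v < w \leq s}(y_w - y_v)$. $1_M \in \{0,1\}^s$ is the indicator vector of $M \subset [s]$. The convention $0^0 = 1$ is used. *)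

(* Defs.v *)
From mathcomp Require Import all_boot all_order all_algebra all_fingroup.
Set Implicit Arguments. Unset Strict Implicit. Unset Printing Implicit Defensive.
Import GRing.Theory Num.Theory.
Local Open Scope ring_scope.

Definition perm_act (s : nat) (sigma : {perm 'I_s}) (G : 'I_s -> int) : 'I_s -> int :=
  fun l => G ((sigma^-1)%g l).

Definition perm_act_alpha (s : nat) (sigma : {perm 'I_s}) (alpha G : 'I_s -> int)
  : 'I_s -> int :=
  fun l => perm_act sigma (fun i => G i + alpha i) l - alpha l.

Definition Delta (s : nat) (y : 'I_s -> int) : int :=
  \prod_(v < s) \prod_(w < s | (v < w)%N) (y w - y v).

Definition indic (s : nat) (M : {set 'I_s}) : 'I_s -> int :=
  fun l => (l \in M)%:R.

Definition sgnp (s : nat) (sigma : {perm 'I_s}) : int := (-1) ^+ odd_perm sigma.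

(* Main.v *)
Require Import Defs.
From mathcomp Require Import all_boot all_order all_algebra all_fingroup.
From mathcomp Require Import zify ring.
Set Implicit Arguments. Unset Strict Implicit. Unset Printing Implicit Defensive.
Import GRing.Theory Num.Theory.
Local Open Scope ring_scope.
Lemma L0 (T : finType) (A B : {set T}) (x : T) :
  x \in B -> x \notin A ->
  \sum_(M : {set T} | (A \subset M) && (M \subset B)) (-1) ^+ #|M| = 0 :> int.
Proof.
move=> xB xA.
pose f (M : {set T}) := if x \in M then M :\ x else x |: M.
have fK : involutive f.
  move=> M; rewrite /f; case xM: (x \in M).
    by rewrite setD11 setD1K.
  by rewrite setU11 setU1K ?xM.
set S := (X in X = _).
have : S = - S.
  rewrite /S {1}(reindex_inj (inv_inj fK)) /= -sumrN.
  apply: eq_big => M.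
    rewrite /f; case: ifP => xM.
      congr andb; apply/idP/idP => /subsetP H; apply/subsetP => y yM.
      - by move: (H y yM); rewrite !inE => /andP[].
      - rewrite !inE (H y yM) andbT; apply/negP => /eqP ey; subst y; by rewrite yM in xA.
      - by case: (eqVneq y x) => [->//|nyx]; apply: H; rewrite !inE nyx.
      - by move: yM; rewrite !inE => /andP[_ /H].
    congr andb; apply/idP/idP => /subsetP H; apply/subsetP => y yM.
    - by move: (H y yM); rewrite !inE => /orP[/eqP ey|//]; subst y; rewrite yM in xA.
    - by rewrite !inE (H y yM) orbT.
    - by apply: H; rewrite !inE yM orbT.
    - by move: yM; rewrite !inE => /orP[/eqP->//|]; apply: H.
  move=> _; rewrite /f; case: ifP => xM.
    by rewrite [in RHS](cardsD1 x) xM exprS mulN1r opprK.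
  by rewrite cardsU1 xM exprS mulN1r.
move=> h; have h2 : S + S = 0 by rewrite {2}h subrr.
lia.
Qed.
Lemma L0' (T : finType) (A B : {set T}) :
  (#|A| < #|B|)%N ->
  \sum_(M : {set T} | (A \subset M) && (M \subset B)) (-1) ^+ #|M| = 0 :> int.
Proof.
move=> hAB; case: (boolP (A \subset B)) => sAB; last first.
  rewrite big_pred0 // => M; apply/negP => /andP[h1 h2]; case/negP: sAB.
  exact: subset_trans h1 h2.
have : ~~ (B \subset A).
  apply/negP => sBA; have := subset_leq_card sBA; lia.
case/subsetPn => x xB xA; exact: L0 xB xA.
Qed.
Lemma L1 (T : finType) (Pi : {set T}) (u : nat) : (u < #|Pi|)%N ->
  \sum_(M : {set T} | M \subset Pi) (-1) ^+ #|M| * (#|M|%:R) ^+ u = 0 :> int.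
Proof.
move=> hu.
have E : forall M : {set T}, (#|M|%:R) ^+ u = \sum_(h : {ffun 'I_u -> T} | [set h i | i in 'I_u] \subset M) 1 :> int.
  move=> M; rewrite sumr_const -natrX; congr (_%:R).
  rewrite -[in LHS](card_ord u) -card_ffun_on; apply: eq_card => h.
  apply/ffun_onP/subsetP => H y.
    by case/imsetP => i _ ->; apply: H.
  by move=> *; apply: H; apply: imset_f.
under eq_bigr => M _ do rewrite E mulr_sumr.
rewrite (exchange_big_dep predT) //=.
apply: big1 => h _.
under eq_bigl => M do rewrite andbC.
rewrite -big_filter /= big_filter.
under eq_bigr => M _ do rewrite mulr1.
apply: L0'.
apply: leq_ltn_trans hu.
by apply: leq_trans (leq_imset_card _ _) _; rewrite card_ord.
Qed.
Section Core.
Variable n : nat.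
Definition Emat (A : 'I_n -> 'M[int]_n) (W : 'M[int]_n) (h : 'I_n -> 'I_n) : 'M[int]_n :=
  \matrix_(k, j) (A (h j) *m W) k j.

Lemma ffun_on_img (h : {ffun 'I_n -> 'I_n}) (S : {set 'I_n}) :
  (h \in ffun_on (mem S)) = ([set h i | i in 'I_n] \subset S).
Proof.
apply/ffun_onP/subsetP => H y.
  by case/imsetP => i _ ->; apply: H.
by apply: H; apply: imset_f.
Qed.

Lemma expand A W (S : {set 'I_n}) :
  \det ((\sum_(i in S) A i) *m W) =
  \sum_(h : {ffun 'I_n -> 'I_n} | [set h i | i in 'I_n] \subset S) \det (Emat A W h).
Proof.
rewrite -[LHS]det_tr.
under [RHS]eq_bigr => h _ do rewrite -det_tr.
rewrite /determinant.
rewrite exchange_big /=.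
apply: eq_bigr => t _.
rewrite -mulr_sumr; congr (_ * _).
under eq_bigr => i _ do rewrite mxE mulmx_suml summxE.
rewrite bigA_distr_big.
apply: eq_big => h; first by rewrite -ffun_on_img.
by move=> _; apply: eq_bigr => i _; rewrite !mxE.
Qed.

Lemma core A W : (-1) ^+ n * \sum_(t : 'S_n) \det (Emat A W t) =
  \sum_(S : {set 'I_n}) (-1) ^+ #|S| * \det ((\sum_(i in S) A i) *m W).
Proof.
under [RHS]eq_bigr => S _ do rewrite expand mulr_sumr.
rewrite [RHS](exchange_big_dep predT) //=.
under eq_bigr => h _ do rewrite -mulr_suml.
rewrite (bigID (fun h : {ffun 'I_n -> 'I_n} => injectiveb h)) /=.
rewrite [X in _ = _ + X]big1 ?addr0; last first.
  move=> h /injectiveP ninj.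
  rewrite (_ : \sum_(_ | _) _ = 0) ?mul0r //.
  transitivity (\sum_(S : {set 'I_n} | ([set h i | i in 'I_n] \subset S) && (S \subset setT)) (-1) ^+ #|S| : int).
    by apply: eq_bigl => S; rewrite subsetT andbT.
  apply: L0'.
  rewrite cardsT card_ord ltn_neqAle.
  rewrite (leq_trans (leq_imset_card _ _)) ?card_ord // andbT.
  apply/negP => /eqP e; apply: ninj => a b; apply: (imset_injP _ _ _) => //.
  apply/eqP; rewrite cardsT card_ord; apply: etrans e; apply: eq_card => y.
  by apply/imsetP/imsetP; case=> x _ ->; exists x.
have -> : \sum_(h : {ffun 'I_n -> 'I_n} | injectiveb h)
   (\sum_(S : {set 'I_n} | [set h i | i in 'I_n] \subset S) (-1) ^+ #|S|) * \det (Emat A W h)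
   = \sum_(h : {ffun 'I_n -> 'I_n} | injectiveb h) (-1) ^+ n * \det (Emat A W h).
  apply: eq_bigr => h /injectiveP hinj; congr (_ * _).
  have eT : [set h i | i in 'I_n] = [set: 'I_n].
    apply/eqP; rewrite eqEcard subsetT cardsT /=.
    have /imset_injP/eqP -> : {in 'I_n &, injective h} by move=> a b _ _; apply: hinj.
    by [].
  rewrite eT (big_pred1 [set: 'I_n]) ?cardsT ?card_ord // => S.
  by rewrite subTset.
rewrite -mulr_sumr; congr (_ * _).
pose phi (t : 'S_n) : {ffun 'I_n -> 'I_n} := [ffun j => t j].
have phiI : injective phi.
  by move=> t1 t2 /ffunP e; apply/permP => j; have := e j; rewrite !ffunE.
rewrite (eq_bigl (fun h => h \in phi @: [set: 'S_n])); last first.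
  move=> h; apply/idP/imsetP.
    move=> /injectiveP H; exists (perm H); first by rewrite inE.
    by apply/ffunP => j; rewrite ffunE permE.
  case=> t _ ->; apply/injectiveP => a b; rewrite !ffunE; apply: perm_inj.
rewrite big_imset /=; last by move=> a b _ _; apply: phiI.
apply: eq_big => [t|t _]; first by rewrite inE.
by congr (\det _); apply/matrixP => k j; rewrite !mxE ffunE.
Qed.
End Core.

Definition Umx (n : nat) (c : int) : 'M[int]_n := \matrix_(k, m) ((- c) ^+ (k - m) *+ 'C(k, m)).
Definition Wmx (n : nat) (x : 'I_n -> int) : 'M[int]_n := \matrix_(m, j) x j ^+ m.

Lemma UW n c (x : 'I_n -> int) k j : (Umx n c *m Wmx x) k j = (x j - c) ^+ k.
Proof.
rewrite !mxE addrC exprDn.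
have hk : (k.+1 <= n)%N by [].
rewrite (big_ord_widen n (fun i => (- c) ^+ (k - i) * x j ^+ i *+ 'C(k, i)) hk) [RHS]big_mkcond /=.
apply: eq_bigr => m _; rewrite !mxE.
case: ifP => hm; first by rewrite mulrnAl.
by rewrite bin_small ?mulr0n ?mul0r //; rewrite ltnNge; apply/negP => h; rewrite ltnS h in hm.
Qed.

Lemma det_sumU n (c : 'I_n -> int) (x : 'I_n -> int) (S : {set 'I_n}) :
  \det ((\sum_(i in S) Umx n (c i)) *m Wmx x) = (#|S|%:R) ^+ n * \det (Wmx x).
Proof.
rewrite det_mulmx det_trig; last first.
  apply/is_trig_mxP => k m hkm; rewrite summxE big1 // => i _.
  by rewrite mxE bin_small ?mulr0n.
congr (_ * _); rewrite (eq_bigr (fun _ => #|S|%:R)) ?prodr_const ?card_ord // => k _.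
rewrite summxE; under eq_bigr => i _ do rewrite mxE subnn expr0 binn.
by rewrite sumr_const.
Qed.

Lemma Delta_ext n (f g : 'I_n -> int) : f =1 g -> Delta f = Delta g.
Proof. by move=> e; rewrite /Delta; apply: eq_bigr => v _; apply: eq_bigr => w _; rewrite !e. Qed.

Lemma sgn_Delta n (x c : 'I_n -> int) (t : 'S_n) :
  sgnp t * Delta (fun l => x ((t^-1)%g l) - c l) = \det (Emat (fun i => Umx n (c i)) (Wmx x) t).
Proof.
have -> : Delta (fun l => x ((t^-1)%g l) - c l) =
   \det (Vandermonde n (\row_l (x ((t^-1)%g l) - c l))).
  by rewrite det_Vandermonde /Delta; apply: eq_bigr => v _; apply: eq_bigr => w _; rewrite !mxE.
have -> : Vandermonde n (\row_l (x ((t^-1)%g l) - c l)) =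
   col_perm (t^-1)%g (Emat (fun i => Umx n (c i)) (Wmx x) t).
  apply/matrixP => k l; rewrite [in RHS]mxE /Emat [in RHS]mxE UW permKV. by rewrite !mxE.
rewrite col_permE det_mulmx det_perm invgK /sgnp mulrCA.
by rewrite -signr_addb addbb expr0 mulr1.
Qed.

Lemma Gconst n (x c : 'I_n -> int) :
  (-1) ^+ n * \sum_(t : 'S_n) sgnp t * Delta (fun l => x ((t^-1)%g l) - c l) =
  \sum_(S : {set 'I_n}) (-1) ^+ #|S| * ((#|S|%:R) ^+ n * \det (Wmx x)).
Proof.
under eq_bigr => t _ do rewrite sgn_Delta.
rewrite core; apply: eq_bigr => S _; by rewrite det_sumU.
Qed.

Theorem lemma6p3 (s : nat) (hs : (1 <= s)%N) (Gamma alpha : 'I_s -> int) (u : nat)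
  (Pi : {set 'I_s}) (hPi : (u < #|Pi|)%N) :
  \sum_(sigma : {perm 'I_s}) \sum_(M : {set 'I_s} | M \subset Pi)
     (-1) ^+ #|M| * sgnp sigma
     * Delta (fun l => perm_act_alpha sigma alpha Gamma l - indic M l)
     * (#|M|%:R) ^+ u = 0 :> int.
Proof.
pose x i := Gamma i + alpha i.
pose K := \sum_(S : {set 'I_s}) (-1) ^+ #|S| * ((#|S|%:R) ^+ s * \det (Wmx x)).
have HG : forall c : 'I_s -> int,
    \sum_(t : 'S_s) sgnp t * Delta (fun l => x ((t^-1)%g l) - c l) = (-1) ^+ s * K.
  by move=> c; rewrite /K -(Gconst x c) signrMK.
rewrite exchange_big /=.
rewrite (eq_bigr (fun M : {set 'I_s} => ((-1) ^+ #|M| * (#|M|%:R) ^+ u) * ((-1) ^+ s * K))); last first.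
  move=> M _; rewrite -(HG (fun l => alpha l + indic M l)) mulr_sumr.
  apply: eq_bigr => t _.
  rewrite (@Delta_ext _ _ (fun l => x ((t^-1)%g l) - (alpha l + indic M l))); last first.
    by move=> l; rewrite /perm_act_alpha /perm_act /x; lia.
  ring.
by rewrite -mulr_suml L1 // mul0r.
Qed.
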